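(* Let $FQ_n$ be the free quandle on $\{x_1,\dots,x_n\}$, $T_n=\{y_1,\dots,y_n\}$ the trivial quandle, and $\beta\in VB_n$ a virtual braid. Then $$\widetilde Q(\hat\beta)=\Bigl\langle x_1,\dots,x_n,y_1,\dots,y_n\ \Bigm|\ \varphi_{2Q}(\beta)(x_i)=x_i,\ \varphi_{2Q}(\beta)(y_i)=y_i\ (i=1,\dots,n),\ y_r*y_s=y_r\ (r,s=1,\dots,n)\Bigr\rangle$$ (a quandle presentation), where $\varphi_{2Q}:VB_n\to\mathrm{Aut}(FQ_n*T_n)$ is the homomorphism given in the context.
   Context: A quandle is a set with a binary operation $*$ such that $a*a=a$; each map $b\mapsto b*a$ is a bijection (write $a*^{-1}b$ for the preimage of $a$ under $x\mapsto x*b$); and $(a*b)*c=(a*c)*(b*c)$. The trivial quandle has $a*b=a$; $FQ_n*T_n$ is the free product of quandles. $VB_n$ is the group generated by $\sigma_1,\dots,\sigma_{n-1},\rho_1,\dots,\rho_{n-1}$ with relations $\sigma_i\sigma_{i+1}\sigma_i=\sigma_{i+1}\sigma_i\sigma_{i+1}$, $\rho_i\rho_{i+1}\rho_i=\rho_{i+1}\rho_i\rho_{i+1}$, $\rho_{i+1}\sigma_i\rho_{i+1}=\rho_i\sigma_{i+1}\rho_i$ ($1\le i\le n-2$), $\sigma_i\sigma_j=\sigma_j\sigma_i$, $\rho_i\rho_j=\rho_j\rho_i$, $\sigma_i\rho_j=\rho_j\sigma_i$ ($|i-j|\ge 2$), $\rho_i^2=1$. The representation $\varphi_{2Q}$ is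 defined by: $\varphi_{2Q}(\sigma_i)$: $x_i\mapsto x_{i+1}$, $x_{i+1}\mapsto x_i*x_{i+1}$, $y_i\mapsto y_{i+1}$, $y_{i+1}\mapsto y_i$; $\varphi_{2Q}(\rho_i)$: $x_i\mapsto x_{i+1}*^{-1}y_i$, $x_{i+1}\mapsto x_i*y_{i+1}$, $y_i\mapsto y_{i+1}$, $y_{i+1}\mapsto y_i$; all other generators fixed; with the convention $\varphi_{2Q}(\beta_1\cdots\beta_k)=\varphi_{2Q}(\beta_k)\cdots\varphi_{2Q}(\beta_1)$. In a braid diagram drawn top to bottom, $\sigma_i$ is a positive crossing, $\sigma_i^{-1}$ a negative crossing and $\rho_i$ a virtual crossing between strands $i,i+1$; $\hat\beta$ is the closure of $\beta$, a virtual link diagram. Definition of $\widetilde Q(L)$ for a virtual link $L$ given by a diagram $D$ with $n$ arcs (an arc being a strand from one crossing, classical or virtual, to the next): label arcs by $(x_k,y_k)$; at each crossing with both strands oriented downward, with upper (incoming) labels $(x_i,y_i),(x_j,y_j)$ left to right and lower (outgoing) labels $(x_p,y_p),(x_q,y_q)$ left to right, impose: positive crossing $x_p=x_j$, $x_q=x_i*x_j$, $y_p=y_j$, $y_q=y_i$; negative crossing $x_p=x_j*^{-1}x_i$, $x_q=x_i$, $y_p=y_j$, $y_q=y_i$; virtual crossing $x_p=x_j*^{-1}y_i$, $x_q=x_i*y_j$, $y_p=y_j$, $y_q=y_i$. $\widetilde Q(L)$ is the quotient of $FQ_n*T_n$ by these relations (well defined up to isomorphism). *)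

(* Defs.v *)
From mathcomp Require Import all_boot.
From Stdlib Require List.
Set Implicit Arguments. Unset Strict Implicit. Unset Printing Implicit Defensive.

(** Terms over generators [G] in the signature of quandles:
    [Op a b] is a * b and [OpInv a b] is a *^{-1} b. *)
Inductive qterm (G : Type) : Type :=
| Gen of G
| Op of qterm G & qterm G
| OpInv of qterm G & qterm G.
Arguments Gen {G}. Arguments Op {G}. Arguments OpInv {G}.

(** Equality in the quandle presented by generators [G] and relations [R]:
    the least congruence containing [R] and the quandle axioms
    a*a = a, (a *^{-1} b) * b = a, (a * b) *^{-1} b = a,
    (a*b)*c = (a*c)*(b*c).  With [R] empty this is the free quandle on [G]. *)
Inductive qeq (G : Type) (R : qterm G -> qterm G -> Prop) :
  qterm G -> qterm G -> Prop :=
| qeq_rel a b : R a b -> qeq R a b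
| qeq_refl a : qeq R a a
| qeq_sym a b : qeq R a b -> qeq R b a
| qeq_trans a b c : qeq R a b -> qeq R b c -> qeq R a c
| qeq_Op a a' b b' : qeq R a a' -> qeq R b b' -> qeq R (Op a b) (Op a' b')
| qeq_OpInv a a' b b' :
    qeq R a a' -> qeq R b b' -> qeq R (OpInv a b) (OpInv a' b')
| qeq_idem a : qeq R (Op a a) a
| qeq_invl a b : qeq R (Op (OpInv a b) b) a
| qeq_invr a b : qeq R (OpInv (Op a b) b) a
| qeq_dist a b c : qeq R (Op (Op a b) c) (Op (Op a c) (Op b c)).

(** The presented quandles <G1 | R1> and <G2 | R2> are isomorphic:
    maps on representatives that descend to mutually inverse maps on the
    quotients, the first one preserving the operation. *)
Definition qpres_iso (G1 G2 : Type)
  (R1 : qterm G1 -> qterm G1 -> Prop) (R2 : qterm G2 -> qterm G2 -> Prop) :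
  Prop :=
  exists (f : qterm G1 -> qterm G2) (g : qterm G2 -> qterm G1),
    [/\ (forall a b, qeq R1 a b -> qeq R2 (f a) (f b)),
        (forall a b, qeq R2 a b -> qeq R1 (g a) (g b)),
        (forall a, qeq R1 (g (f a)) a),
        (forall b, qeq R2 (f (g b)) b) &
        (forall a b, qeq R2 (f (Op a b)) (Op (f a) (f b)))].

Fixpoint qsubst (G H : Type) (s : G -> qterm H) (t : qterm G) : qterm H :=
  match t with
  | Gen g => s g
  | Op a b => Op (qsubst s a) (qsubst s b)
  | OpInv a b => OpInv (qsubst s a) (qsubst s b)
  end.

(** Generators of FQ * T : x-generators and y-generators indexed by [A]. *)
Inductive xy (A : Type) : Type := xg of A | yg of A.
Arguments xg {A}. Arguments yg {A}.

(** Relations y_r * y_s = y_r making the y's a trivial quandle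
    (the presentation of FQ_A * T_A is <x_a, y_a | these>). *)
Definition triv_rel (A : Type) (u v : qterm (xy A)) : Prop :=
  exists r s : A, u = Op (Gen (yg r)) (Gen (yg s)) /\ v = Gen (yg r).

(** Letters: sigma_i (Pos), sigma_i^{-1} (Neg), rho_i (Virt), for
    i : 'I_n.-1 (0-indexed: the letter acts on positions i and i+1 of 'I_n). *)
Inductive kind := Pos | Neg | Virt.
Definition letter (n : nat) := (kind * 'I_n.-1)%type.

Lemma pos_r_subproof n (i : 'I_n.-1) : i.+1 < n.
Proof. by case: n i => [|n] [i Hi]. Qed.

Lemma pos_l_subproof n (i : 'I_n.-1) : i < n.
Proof. exact: ltnW (pos_r_subproof i). Qed.

Definition pos_l n (i : 'I_n.-1) : 'I_n := Ordinal (pos_l_subproof i).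
Definition pos_r n (i : 'I_n.-1) : 'I_n := Ordinal (pos_r_subproof i).

Definition phi_letter n (l : letter n) (v : xy 'I_n) : qterm (xy 'I_n) :=
  let: (kd, i) := l in
  let L := pos_l i in let Rr := pos_r i in
  let X j := Gen (xg j) in let Y j := Gen (yg j) in
  match v with
  | xg j =>
      if j == L then
        match kd with
        | Pos => X Rr
        | Neg => OpInv (X Rr) (X L)
        | Virt => OpInv (X Rr) (Y L)
        end
      else if j == Rr then
        match kd with
        | Pos => Op (X L) (X Rr)
        | Neg => X L
        | Virt => Op (X L) (Y Rr)
        end
      else X j
  | yg j => if j == L then Y Rr else if j == Rr then Y L else Y j
  end.

(** phi_{2Q}(b_1 ... b_k)(v), with the paper's convention
    phi(b_1...b_k) = phi(b_k)...phi(b_1) read as composition of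
    automorphisms acting on the right, i.e. functionally
    phi(b_1) o ... o phi(b_k)  (so phi(beta)(x_i) is the label of the
    i-th bottom end of the diagram in terms of the top labels). *)
Definition phi_word n (w : seq (letter n)) (v : xy 'I_n) : qterm (xy 'I_n) :=
  foldr (fun l t => qsubst (phi_letter l) t) (Gen v) w.

Definition braid_rel n (w : seq (letter n)) (u v : qterm (xy 'I_n)) : Prop :=
  (exists i : 'I_n, u = phi_word w (xg i) /\ v = Gen (xg i)) \/
  (exists i : 'I_n, u = phi_word w (yg i) /\ v = Gen (yg i)) \/
  triv_rel u v.

(** Crossing number t (t-th letter, counted from the top). *)
Definition crossing n (w : seq (letter n)) (t : 'I_(size w)) : letter n :=
  tnth (in_tuple w) t.
Arguments crossing {n} w t.

Definition touches n (l : letter n) (p : 'I_n) : bool :=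
  (p == pos_l l.2) || (p == pos_r l.2).

Definition untouched n (w : seq (letter n)) (p : 'I_n) : bool :=
  all (fun l => ~~ touches l p) w.

(** Arcs of the closure of w: every arc starts at exactly one outgoing
    end of a crossing (t, false = left / true = right); in addition each
    position never touched by a crossing gives a closed component with no
    crossing, which is a single arc. *)
Definition arc n (w : seq (letter n)) :=
  (('I_(size w) * bool) + {p : 'I_n | untouched w p})%type.
Arguments arc : clear implicits.

Definition out_arc n (w : seq (letter n)) (t : 'I_(size w)) (p : 'I_n) :
  arc n w := inl (t, p == pos_r (crossing w t).2).
Arguments out_arc {n} w t p.

(** Incoming arc of crossing t at position p: the arc that left the last
    crossing above t touching p, or (going around the closure) the last
    crossing of the whole word touching p. *)
Definition in_arc n (w : seq (letter n)) (t : 'I_(size w)) (p : 'I_n) :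
  arc n w :=
  let before : seq 'I_(size w) :=
    [seq s : 'I_(size w) <- enum 'I_(size w) | (s < t) && touches (crossing w s) p] in
  let all_s : seq 'I_(size w) := [seq s : 'I_(size w) <- enum 'I_(size w) | touches (crossing w s) p] in
  match rev before, rev all_s with
  | s :: _, _ => out_arc w s p
  | [::], s :: _ => out_arc w s p
  | [::], [::] => out_arc w t p (* unreachable: t touches p *)
  end.
Arguments in_arc {n} w t p.

Definition crossing_rels n (w : seq (letter n)) (t : 'I_(size w)) :
  list (qterm (xy (arc n w)) * qterm (xy (arc n w))) :=
  let: (kd, i) := crossing w t in
  let a : arc n w := in_arc w t (pos_l i) in   (* upper left  (x_i, y_i) *)
  let b : arc n w := in_arc w t (pos_r i) in   (* upper right (x_j, y_j) *)
  let p : arc n w := inl (t, false) in         (* lower left  (x_p, y_p) *)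
  let q : arc n w := inl (t, true) in          (* lower right (x_q, y_q) *)
  let X c := Gen (xg c) in let Y c := Gen (yg c) in
  match kd with
  | Pos => [:: (X p, X b); (X q, Op (X a) (X b)); (Y p, Y b); (Y q, Y a)]
  | Neg => [:: (X p, OpInv (X b) (X a)); (X q, X a); (Y p, Y b); (Y q, Y a)]
  | Virt => [:: (X p, OpInv (X b) (Y a)); (X q, Op (X a) (Y b));
               (Y p, Y b); (Y q, Y a)]
  end.
Arguments crossing_rels {n} w t.

(** Relations defining Qtilde(closure of w) as a quotient of
    FQ_arcs * T_arcs. *)
Definition closure_rel n (w : seq (letter n)) (u v : qterm (xy (arc n w))) :
  Prop :=
  triv_rel u v \/ exists t : 'I_(size w), List.In (u, v) (crossing_rels w t).
Arguments closure_rel {n} w u v.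
Arguments braid_rel {n} w u v.

(* Main.v *)
Require Import Defs.
From mathcomp Require Import all_boot.
Set Implicit Arguments. Unset Strict Implicit.

Lemma rev_filter_cons m (P : pred 'I_m) s l :
  rev (filter P (enum 'I_m)) = s :: l -> P s /\ forall s', P s' -> s' <= s.
Proof.
move=> E.
have Hs : s \in filter P (enum 'I_m) by rewrite -mem_rev E mem_head.
split; first by move: Hs; rewrite mem_filter => /andP[].
have so : sorted (relpre val ltn) (enum 'I_m) by rewrite -sorted_map val_enum_ord iota_ltn_sorted.
have sf := sorted_filter (fun a b c => @ltn_trans (val a) (val b) (val c)) P so.
move: sf; rewrite -(revK (filter _ _)) rev_sorted E /=.
rewrite path_sortedE; last by move=> a b c /= H1 H2; exact: ltn_trans H2 H1.
case/andP=> /allP H _ s' Ps'.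
have : s' \in s :: l by rewrite -E mem_rev mem_filter Ps' mem_enum.
rewrite inE => /orP[/eqP -> //|Hl].
by apply: ltnW; exact: H.
Qed.

Lemma rev_filter_nil m (P : pred 'I_m) :
  rev (filter P (enum 'I_m)) = [::] -> forall s, ~~ P s.
Proof.
move=> E s; apply/negP => Ps.
have : s \in rev (filter P (enum 'I_m)) by rewrite mem_rev mem_filter Ps mem_enum.
by rewrite E.
Qed.
Lemma qsubst_comp (A B C : Type) (s : A -> qterm B) (s' : B -> qterm C) t :
  qsubst s' (qsubst s t) = qsubst (fun a => qsubst s' (s a)) t.
Proof. by elim: t => //= a -> b ->. Qed.

Lemma qsubst_ext (A B : Type) (s s' : A -> qterm B) t :
  (forall a, s a = s' a) -> qsubst s t = qsubst s' t.
Proof. by move=> H; elim: t => //= a -> b ->. Qed.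

Lemma qsubst_id (A : Type) (t : qterm A) : qsubst Gen t = t.
Proof. by elim: t => //= a -> b ->. Qed.

Lemma qsubst_qeq (A B : Type) (R : qterm B -> qterm B -> Prop) (s s' : A -> qterm B) t :
  (forall a, qeq R (s a) (s' a)) -> qeq R (qsubst s t) (qsubst s' t).
Proof.
move=> H; elim: t => //= a Ha b Hb; [exact: qeq_Op | exact: qeq_OpInv].
Qed.

Lemma qsubst_hom (A B : Type) (R1 : qterm A -> qterm A -> Prop)
  (R2 : qterm B -> qterm B -> Prop) (s : A -> qterm B) :
  (forall u v, R1 u v -> qeq R2 (qsubst s u) (qsubst s v)) ->
  forall a b, qeq R1 a b -> qeq R2 (qsubst s a) (qsubst s b).
Proof.
move=> H a b; elim => /=.
- by move=> *; apply: H.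
- by move=> *; apply: qeq_refl.
- by move=> ? ? _ H1; apply: qeq_sym.
- by move=> ? ? ? _ H1 _ H2; exact: qeq_trans H1 H2.
- by move=> ? ? ? ? _ H1 _ H2; apply: qeq_Op.
- by move=> ? ? ? ? _ H1 _ H2; apply: qeq_OpInv.
- by move=> *; apply: qeq_idem.
- by move=> *; apply: qeq_invl.
- by move=> *; apply: qeq_invr.
- by move=> *; apply: qeq_dist.
Qed.

Definition xyof (A : Type) (v : xy A) : A := match v with xg a => a | yg a => a end.
Definition rexy (A B : Type) (v : xy A) (b : B) : xy B :=
  match v with xg _ => xg b | yg _ => yg b end.

Lemma xyof_rexy (A B : Type) (v : xy A) (b : B) : xyof (rexy v b) = b.
Proof. by case: v. Qed.

Lemma rexy_xyof (A : Type) (v : xy A) : rexy v (xyof v) = v.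
Proof. by case: v. Qed.

Lemma rexy_rexy (A B C : Type) (v : xy A) (a : B) (c : C) : rexy (rexy v a) c = rexy v c.
Proof. by case: v. Qed.

Lemma neq_rl n (i : 'I_n.-1) : (pos_r i == pos_l i) = false.
Proof. by apply/negbTE; rewrite -val_eqE /= eqn_leq ltnn. Qed.

Section Main.
Variables (n : nat) (w : seq (letter n)).
Local Notation N := (size w).

Definition lab k (v : xy 'I_n) := phi_word (take k w) v.
Definition before (k : nat) (p : 'I_n) :=
  [seq s : 'I_(size w) <- enum 'I_(size w) | (s < k) && touches (crossing w s) p].
Definition alls (p : 'I_n) :=
  [seq s : 'I_(size w) <- enum 'I_(size w) | touches (crossing w s) p].

Lemma untouched_nil p : rev (alls p) = [::] -> untouched w p.
Proof.
move/rev_filter_nil => H; apply/(@all_tnthP _ _ _ (in_tuple w)) => i.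
exact: H.
Qed.

Definition top_aux p (l : seq 'I_N) (e : rev (alls p) = l) : Defs.arc n w :=
  match l as l0 return rev (alls p) = l0 -> Defs.arc n w with
  | s :: _ => fun _ => out_arc w s p
  | [::] => fun H => inr (exist _ p (untouched_nil H))
  end e.

Definition top_arc p : Defs.arc n w := top_aux (erefl (rev (alls p))).

Lemma top_arc_cons p s l : rev (alls p) = s :: l -> top_arc p = out_arc w s p.
Proof.
move=> E; rewrite /top_arc.
suff H : forall l0 (e : rev (alls p) = l0), top_aux e = out_arc w s p by apply: H.
move=> l0 e; have h : l0 = s :: l by rewrite -e E.
rewrite h in e *; by [].
Qed.

Lemma top_arc_nil p (H : untouched w p) : top_arc p = inr (exist _ p H).
Proof.
have E : rev (alls p) = [::].
  rewrite /alls; suff -> : [seq s : 'I_N <- enum 'I_N | touches (crossing w s) p] = [::] by [].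
  apply/eqP; rewrite -[_ == _]negbK -has_filter; apply/hasPn => s _.
  exact: (@all_tnthP _ _ _ (in_tuple w) H s).
rewrite /top_arc.
suff G : forall l0 (e : rev (alls p) = l0), top_aux e = inr (exist _ p H) by apply: G.
move=> l0 e; have h : l0 = [::] by rewrite -e E.
rewrite h in e *; by rewrite /top_aux (bool_irrelevance (untouched_nil e) H).
Qed.

Definition arc_at (k : nat) (p : 'I_n) : Defs.arc n w :=
  match rev (before k p) with s :: _ => out_arc w s p | [::] => top_arc p end.

Lemma in_arc_at (t : 'I_N) p : touches (crossing w t) p -> in_arc w t p = arc_at t p.
Proof.
move=> Ht; rewrite /in_arc /arc_at -/(before t p) -/(alls p).
case: (rev (before t p)) => // .
case E: (rev (alls p)) => [|s l].
  by move: (rev_filter_nil E t); rewrite Ht.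
by rewrite (top_arc_cons E).
Qed.

Lemma arc_at0 p : arc_at 0 p = top_arc p.
Proof.
rewrite /arc_at; case E: (rev (before 0 p)) => [//|s l].
by case: (rev_filter_cons E) => /andP[].
Qed.

Lemma arc_atN p : arc_at N p = top_arc p.
Proof.
rewrite /arc_at /before (eq_filter (a2 := fun s : 'I_N => touches (crossing w s) p)); last first.
  by move=> s /=; rewrite ltn_ord.
rewrite -/(alls p); case E: (rev (alls p)) => [|s l]; first by [].
by rewrite (top_arc_cons E).
Qed.

Lemma arc_at_untouch (t : 'I_N) p : ~~ touches (crossing w t) p -> arc_at t.+1 p = arc_at t p.
Proof.
move=> Ht; rewrite /arc_at /before (eq_filter (a2 := fun s : 'I_N => (s < t) && touches (crossing w s) p)) //.
move=> s /=; rewrite ltnS leq_eqVlt; case: eqP => //= /val_inj ->.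
by rewrite ltnn (negbTE Ht).
Qed.

Lemma arc_at_touch (t : 'I_N) p : touches (crossing w t) p -> arc_at t.+1 p = out_arc w t p.
Proof.
move=> Ht; rewrite /arc_at; case E: (rev (before t.+1 p)) => [|s l].
  by move: (rev_filter_nil E t); rewrite ltnSn Ht.
case: (rev_filter_cons E) => /andP[H1 _] H2.
have := H2 t; rewrite ltnSn Ht => /(_ isT) H3.
by rewrite (_ : s = t) //; apply/val_inj/eqP; rewrite eqn_leq H3 -ltnS H1.
Qed.

Lemma phi_word_rcons (u : seq (letter n)) l v :
  phi_word (rcons u l) v = qsubst (phi_word u) (phi_letter l v).
Proof.
elim: u => [|a u IH] /=; first by rewrite qsubst_id.
by rewrite /phi_word /= -/(phi_word _ _) IH qsubst_comp.
Qed.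

Lemma crossing_nth (t : 'I_N) x0 : nth x0 w t = crossing w t.
Proof. by rewrite /crossing (tnth_nth x0). Qed.

Lemma lab_step (t : 'I_N) v : lab t.+1 v = qsubst (lab t) (phi_letter (crossing w t) v).
Proof.
rewrite /lab (take_nth (crossing w t)) ?ltn_ord // phi_word_rcons.
by rewrite (crossing_nth t (crossing w t)).
Qed.

Lemma lab0 v : lab 0 v = Gen v.
Proof. by rewrite /lab take0. Qed.

Lemma labN v : lab N v = phi_word w v.
Proof. by rewrite /lab take_size. Qed.

Lemma phi_untouch (l : letter n) v : ~~ touches l (xyof v) -> phi_letter l v = Gen v.
Proof.
case: l => kd i; case: v => p /=; rewrite /touches /= negb_or => /andP[/negbTE -> /negbTE ->] //.
Qed.

Lemma lab_stable j1 j2 v : j1 <= j2 <= N ->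
  (forall s : 'I_N, j1 <= s < j2 -> ~~ touches (crossing w s) (xyof v)) -> lab j2 v = lab j1 v.
Proof.
elim: j2 => [|j IH]; first by rewrite leqn0 => /andP[/eqP -> _].
case/andP; rewrite leq_eqVlt => /orP[/eqP -> //|H1] H2 H.
have jN : j < N by [].
rewrite (lab_step (Ordinal jN)) phi_untouch /=; last by apply: H => /=; rewrite -ltnS H1 /=.
have H1' : j1 <= j by [].
rewrite IH //; first by rewrite H1' ltnW.
by move=> s /andP[a b]; apply: H; rewrite a /= ltnW.
Qed.

Lemma phi_word_y (u : seq (letter n)) q : exists r, phi_word u (yg q) = Gen (yg r).
Proof.
elim: u => [|a u [r IH]] /=; first by exists q.
rewrite /phi_word /= -/(phi_word _ _) IH /=; case: a => kd i /=.
by case: ifP => _; [eexists | case: ifP => _; eexists].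
Qed.

Definition apos (a : Defs.arc n w) : 'I_n :=
  match a with
  | inl (t, b) => if b then pos_r (crossing w t).2 else pos_l (crossing w t).2
  | inr u => val u end.
Definition alvl (a : Defs.arc n w) : nat :=
  match a with inl (t, _) => t.+1 | inr _ => 0 end.
Definition Fm (v : xy (Defs.arc n w)) : qterm (xy 'I_n) :=
  lab (alvl (xyof v)) (rexy v (apos (xyof v))).
Definition Gm (v : xy 'I_n) : qterm (xy (Defs.arc n w)) :=
  Gen (rexy v (top_arc (xyof v))).

Lemma apos_out (t : 'I_N) p : touches (crossing w t) p -> apos (out_arc w t p) = p.
Proof.
rewrite /touches /out_arc /= => /orP[/eqP ->|/eqP ->]; last by rewrite eqxx.
by rewrite eq_sym neq_rl.
Qed.

Lemma K1 k v : k <= N ->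
  qeq (braid_rel w) (Fm (rexy v (arc_at k (xyof v)))) (lab k v).
Proof.
move=> kN.
have Hfm : forall (s : 'I_N), touches (crossing w s) (xyof v) ->
   Fm (rexy v (out_arc w s (xyof v))) = lab s.+1 v.
  move=> s Ts; rewrite /Fm.
  have -> : xyof (rexy v (out_arc w s (xyof v))) = out_arc w s (xyof v) by case: (v).
  rewrite apos_out //; by case: (v).
rewrite /arc_at; case E: (rev (before k (xyof v))) => [|s l].
  have Hb := rev_filter_nil E.
  have Hst : lab k v = lab 0 v.
    apply: lab_stable => [|s /andP[_ sk]]; first by rewrite kN.
    by move: (Hb s); rewrite sk.
  rewrite Hst lab0.
  case E2: (rev (alls (xyof v))) => [|s l].
    have U := untouched_nil E2; rewrite (top_arc_nil U) /Fm xyof_rexy /= rexy_rexy rexy_xyof lab0; exact: qeq_refl.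
  rewrite (top_arc_cons E2).
  case: (rev_filter_cons E2) => Hs Hmax.
  have HN : lab N v = lab s.+1 v.
    apply: lab_stable; first by rewrite ltn_ord leqnn.
    move=> s' /andP[a b]; apply/negP => T; move: (Hmax s' T); rewrite leqNgt.
    by rewrite a.
  rewrite Hfm // -HN labN; apply: qeq_rel; rewrite /braid_rel; case: (v) => q.
    by left; exists q.
  by right; left; exists q.
case: (rev_filter_cons E) => /andP[sk Hs] Hmax.
have Hk : lab k v = lab s.+1 v.
  apply: lab_stable; first by rewrite sk kN.
  move=> s' /andP[a b]; apply/negP => T; move: (Hmax s'); rewrite b T => /(_ isT).
  by rewrite leqNgt a.
rewrite Hfm // -Hk; exact: qeq_refl.
Qed.

Lemma Fin (t : 'I_N) v : touches (crossing w t) (xyof v) ->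
  qeq (braid_rel w) (Fm (rexy v (in_arc w t (xyof v)))) (lab t v).
Proof. by move=> H; rewrite in_arc_at //; apply: K1; rewrite ltnW. Qed.

Definition At k (u : xy 'I_n) : qterm (xy (Defs.arc n w)) := Gen (rexy u (arc_at k (xyof u))).

Lemma cross_step (t : 'I_N) v :
  qeq (closure_rel w) (qsubst (At t) (phi_letter (crossing w t) v)) (At t.+1 v).
Proof.
case T: (touches (crossing w t) (xyof v)); last first.
  rewrite phi_untouch ?T //= /At arc_at_untouch ?T //; exact: qeq_refl.
have Hin : forall a b, List.In (a, b) (crossing_rels w t) -> qeq (closure_rel w) b a.
  by move=> a b H; apply: qeq_sym; apply: qeq_rel; right; exists t.
rewrite /At arc_at_touch //.
have HL : arc_at t (pos_l (crossing w t).2) = in_arc w t (pos_l (crossing w t).2).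
  by rewrite in_arc_at // /touches eqxx.
have HR : arc_at t (pos_r (crossing w t).2) = in_arc w t (pos_r (crossing w t).2).
  by rewrite in_arc_at // /touches eqxx orbT.
move: T Hin HL HR; rewrite /touches /out_arc /crossing_rels.
case: (crossing w t) => kd i /= T Hin HL HR.
case: v T => p /= /orP[] /eqP ->; rewrite ?eqxx ?neq_rl ?(eq_sym (pos_l i)) ?neq_rl /=;
  case: kd Hin => /= Hin; rewrite ?HL ?HR; apply: Hin; simpl; tauto.
Qed.

Lemma K2 k v : k <= N -> qeq (closure_rel w) (qsubst Gm (lab k v)) (At k v).
Proof.
elim: k v => [|k IH] v kN.
  by rewrite lab0 /= /Gm /At arc_at0; exact: qeq_refl.
have kN' : k < N by [].
rewrite (lab_step (Ordinal kN')) qsubst_comp.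
apply: qeq_trans (cross_step (Ordinal kN') v).
apply: qsubst_qeq => u; apply: IH; exact: ltnW.
Qed.

End Main.

Theorem theorem5 (n : nat) (w : seq (letter n)) :
  qpres_iso (closure_rel w) (braid_rel w).
Proof.
exists (qsubst (@Fm n w)), (qsubst (@Gm n w)); split.
- apply: qsubst_hom => u v [[r [s [-> ->]]]|[t Hin]].
    rewrite /= /Fm /= /lab.
    case: (phi_word_y (take (alvl r) w) (apos r)) => r' ->.
    case: (phi_word_y (take (alvl s) w) (apos s)) => s' ->.
    by apply: qeq_rel; right; right; exists r', s'.
  have e1 : Fm (xg (inl (t, false))) = qsubst (lab w t) (phi_letter (crossing w t) (xg (pos_l (crossing w t).2))) by rewrite -lab_step.
  have e2 : Fm (xg (inl (t, true))) = qsubst (lab w t) (phi_letter (crossing w t) (xg (pos_r (crossing w t).2))) by rewrite -lab_step.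
  have e3 : Fm (yg (inl (t, false))) = qsubst (lab w t) (phi_letter (crossing w t) (yg (pos_l (crossing w t).2))) by rewrite -lab_step.
  have e4 : Fm (yg (inl (t, true))) = qsubst (lab w t) (phi_letter (crossing w t) (yg (pos_r (crossing w t).2))) by rewrite -lab_step.
  have T1 : touches (crossing w t) (pos_l (crossing w t).2) by rewrite /touches eqxx.
  have T2 : touches (crossing w t) (pos_r (crossing w t).2) by rewrite /touches eqxx orbT.
  have f1 := Fin (v := xg (pos_l (crossing w t).2)) T1.
  have f2 := Fin (v := yg (pos_l (crossing w t).2)) T1.
  have f3 := Fin (v := xg (pos_r (crossing w t).2)) T2.
  have f4 := Fin (v := yg (pos_r (crossing w t).2)) T2.
  clear T1 T2.
  move: Hin e1 e2 e3 e4 f1 f2 f3 f4; rewrite /crossing_rels.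
  case: (crossing w t) => kd i /= Hin e1 e2 e3 e4 f1 f2 f3 f4.
  move: e1 e2 e3 e4; rewrite /= ?eqxx ?neq_rl => e1 e2 e3 e4.
  case: kd Hin e1 e2 e3 e4 => /=;
  case=> [[<- <-]|[[<- <-]|[[<- <-]|[[<- <-]|[]]]]] /= e1 e2 e3 e4;
  rewrite ?e1 ?e2 ?e3 ?e4 /=;
  repeat first [apply: qeq_Op | apply: qeq_OpInv | (apply: qeq_sym; assumption) | apply: qeq_refl].
- apply: qsubst_hom => u v [[i [-> ->]]|[[i [-> ->]]|[r [s [-> ->]]]]] /=.
  + rewrite -(@labN n w); apply: qeq_trans (@K2 n w (size w) _ (leqnn _)) _.
    by rewrite /At /= arc_atN; exact: qeq_refl.
  + rewrite -(@labN n w); apply: qeq_trans (@K2 n w (size w) _ (leqnn _)) _.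
    by rewrite /At /= arc_atN; exact: qeq_refl.
  + by apply: qeq_rel; left; exists (top_arc w r), (top_arc w s).
- move=> a; rewrite qsubst_comp -[X in qeq _ _ X]qsubst_id; apply: qsubst_qeq => v.
  have Hv : forall x : xy (Defs.arc n w), qeq (closure_rel w) (qsubst (@Gm n w) (Fm x)) (Gen x).
    move=> x; rewrite /Fm; case E: (xyof x) => [[t b]|[p Hp]].
      apply: qeq_trans (@K2 n w t.+1 _ (ltn_ord t)) _.
      rewrite /At.
      have Ht : touches (crossing w t) (apos (inl (t, b))).
        by rewrite /touches /=; case: (b); rewrite eqxx ?orbT.
      rewrite xyof_rexy arc_at_touch // /out_arc.
      have -> : (apos (inl (t, b)) == pos_r (crossing w t).2) = b.
        by case: (b) => /=; rewrite ?eqxx // eq_sym neq_rl.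
      rewrite rexy_rexy -E rexy_xyof; exact: qeq_refl.
    rewrite /= lab0 /= /Gm xyof_rexy (top_arc_nil Hp) rexy_rexy -E rexy_xyof.
    exact: qeq_refl.
  exact: Hv.
- move=> b; rewrite qsubst_comp -[X in qeq _ _ X]qsubst_id; apply: qsubst_qeq => v /=.
  rewrite /Gm /= -arc_at0.
  have := @K1 n w 0 v (leq0n _); rewrite lab0; apply.
- by move=> a b; exact: qeq_refl.
Qed.
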